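(* Let $a,b,c,q$ be complex parameters for which all series below are defined (no denominator parameter a nonpositive integer), and for $|x|<1$ put \[ F^q(x):={}_3F_2\!\left({1,c,q\atop a,b};x\right), \] and write $F_a(x)$ for the same function regarded as depending on the parameter $a$ (so $F_{a-1}$, $F_{a-2}$ have $a$ replaced by $a-1$, $a-2$). Then \[ (a-q-1)(b-q-1)F^q(x)+q\big(a+b-3-2q-(c-q-1)x\big)F^{q+1}(x)+q(1+q)(1-x)F^{q+2}(x)=(a-1)(b-1), \] \[ (a-2)(a-1)(1-x)F_{a-2}(x)+(a-1)\big((2a-c-q-3)x-a+b+1\big)F_{a-1}(x)-(a-q-1)(a-c-1)x\,F_a(x)=(a-1)(b-1). \] In particular, if $a,b,c,q$ are real with $a+b>c+q+2$, then \[ (a-q-1)(b-q-1)F^q(1)+q(a+b-c-2-q)F^{q+1}(1)=(a-1)(b-1), \] \[ (a-1)(a+b-c-q-2)F_{a-1}(1)-(a-q-1)(a-c-1)F_a(1)=(a-1)(b-1). \]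
   Context: ${}_3F_2\!\left({a_1,a_2,a_3\atop b_1,b_2};x\right)=\sum_{n\ge0}\frac{(a_1)_n(a_2)_n(a_3)_n}{(b_1)_n(b_2)_n}\frac{x^n}{n!}$ with $(x)_n=x(x+1)\cdots(x+n-1)$; it converges at $x=1$ when $b_1+b_2-a_1-a_2-a_3>0$. *)

(* Defs.v *)
From Stdlib Require Import Reals Factorial.
Open Scope R_scope.

Record Cplx := mkC { Cre : R; Cim : R }.

Definition RtoC (r : R) : Cplx := mkC r 0.
Definition Cnat (n : nat) : Cplx := RtoC (INR n).
Definition Cadd (z w : Cplx) : Cplx := mkC (Cre z + Cre w) (Cim z + Cim w).
Definition Copp (z : Cplx) : Cplx := mkC (- Cre z) (- Cim z).
Definition Csub (z w : Cplx) : Cplx := Cadd z (Copp w).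
Definition Cmul (z w : Cplx) : Cplx :=
  mkC (Cre z * Cre w - Cim z * Cim w) (Cre z * Cim w + Cim z * Cre w).
Definition Cinv (z : Cplx) : Cplx :=
  mkC (Cre z / (Cre z ^ 2 + Cim z ^ 2)) (- Cim z / (Cre z ^ 2 + Cim z ^ 2)).
Definition Cnorm (z : Cplx) : R := sqrt (Cre z ^ 2 + Cim z ^ 2).

Fixpoint Cpow (z : Cplx) (n : nat) : Cplx :=
  match n with O => RtoC 1 | S k => Cmul z (Cpow z k) end.

Declare Scope Cx_scope.
Delimit Scope Cx_scope with Cx.
Infix "+" := Cadd : Cx_scope.
Infix "-" := Csub : Cx_scope.
Infix "*" := Cmul : Cx_scope.
Notation "- z" := (Copp z) : Cx_scope.

Fixpoint poch (x : Cplx) (n : nat) : Cplx :=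
  match n with O => RtoC 1 | S k => Cmul (poch x k) (Cadd x (Cnat k)) end.

Definition nonpos_int (z : Cplx) : Prop := exists n : nat, z = Copp (Cnat n).

Definition F32_term (a1 a2 a3 b1 b2 x : Cplx) (n : nat) : Cplx :=
  Cmul (Cmul (Cmul (Cmul (poch a1 n) (poch a2 n)) (poch a3 n))
             (Cinv (Cmul (poch b1 n) (poch b2 n))))
       (Cmul (Cpow x n) (Cinv (Cnat (fact n)))).

Fixpoint Cpartial (f : nat -> Cplx) (N : nat) : Cplx :=
  match N with O => f O | S k => Cadd (Cpartial f k) (f (S k)) end.

Definition Cseries_cv (f : nat -> Cplx) (L : Cplx) : Prop :=
  Un_cv (fun N => Cre (Cpartial f N)) (Cre L) /\
  Un_cv (fun N => Cim (Cpartial f N)) (Cim L).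

Definition F32_cv (a1 a2 a3 b1 b2 x L : Cplx) : Prop :=
  Cseries_cv (F32_term a1 a2 a3 b1 b2 x) L.

(* Main.v *)
Require Import Defs.
From Stdlib Require Import Reals Lra Lia ZArith.
From Coquelicot Require Coquelicot.
Open Scope R_scope.
Module Aux.
Import Coquelicot.Coquelicot.

Lemma big_nat (K : R) : exists N : nat, forall n, (N <= n)%nat -> K <= INR n.
Proof.
  exists (Z.abs_nat (up K)). intros n Hn.
  apply le_INR in Hn. eapply Rle_trans; [|exact Hn].
  rewrite INR_IZR_INZ, Zabs2Nat.id_abs.
  destruct (archimed K) as [H1 _].
  apply Rle_trans with (IZR (up K)); [lra|]. apply IZR_le. lia.
Qed.

Definition toC (z : Cplx) : C := (Cre z, Cim z).
Lemma toC_add z w : toC (Defs.Cadd z w) = Cplus (toC z) (toC w). Proof. reflexivity. Qed.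
Lemma toC_opp z : toC (Defs.Copp z) = Copp (toC z). Proof. reflexivity. Qed.
Lemma toC_sub z w : toC (Defs.Csub z w) = Cminus (toC z) (toC w). Proof. reflexivity. Qed.
Lemma toC_mul z w : toC (Defs.Cmul z w) = Cmult (toC z) (toC w). Proof. reflexivity. Qed.
Lemma toC_inv z : toC (Defs.Cinv z) = Coquelicot.Complex.Cinv (toC z). Proof. reflexivity. Qed.
Lemma toC_RtoC r : toC (Defs.RtoC r) = RtoC r. Proof. reflexivity. Qed.
Lemma toC_Cnat n : toC (Cnat n) = RtoC (INR n). Proof. reflexivity. Qed.
Lemma toC_inj z w : toC z = toC w -> z = w.
Proof. destruct z, w; unfold toC; simpl; intro H; inversion H; reflexivity. Qed.
Lemma toC_Cre z : fst (toC z) = Cre z. Proof. reflexivity. Qed.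
Lemma toC_Cim z : snd (toC z) = Cim z. Proof. reflexivity. Qed.

Fixpoint pochC (x : C) (n : nat) : C :=
  match n with O => RtoC 1 | S k => Cmult (pochC x k) (Cplus x (RtoC (INR k))) end.
Fixpoint powC (x : C) (n : nat) : C :=
  match n with O => RtoC 1 | S k => Cmult x (powC x k) end.
Lemma toC_poch x n : toC (poch x n) = pochC (toC x) n.
Proof. induction n; simpl; [reflexivity|]. rewrite toC_mul, IHn. reflexivity. Qed.
Lemma toC_pow x n : toC (Defs.Cpow x n) = powC (toC x) n.
Proof. induction n; simpl; [reflexivity|]. rewrite toC_mul, IHn. reflexivity. Qed.

Definition TC (c q a b x : C) (n : nat) : C :=
  pochC c n * pochC q n * powC x n * / (pochC a n * pochC b n).

Lemma poch1 n : pochC (RtoC 1) n = RtoC (INR (fact n)).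
Proof.
  induction n; simpl pochC; [reflexivity|]. rewrite IHn.
  change (fact (S n)) with (S n * fact n)%nat. rewrite mult_INR, S_INR.
  rewrite !RtoC_mult, !RtoC_plus. ring.
Qed.

Lemma RtoC_neq r : r <> 0 -> RtoC r <> RtoC 0.
Proof. intros H E. apply H. inversion E. reflexivity. Qed.

Lemma term_TC c q a b x n :
  toC (F32_term (Cnat 1) c q a b x n) = TC (toC c) (toC q) (toC a) (toC b) (toC x) n.
Proof.
  unfold F32_term, TC. rewrite !toC_mul, !toC_inv, !toC_mul, !toC_poch, toC_pow, !toC_Cnat.
  change (INR 1) with 1. rewrite poch1.
  set (D := Coquelicot.Complex.Cinv (pochC (toC a) n * pochC (toC b) n)).
  field. apply RtoC_neq. apply INR_fact_neq_0.
Qed.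

Fixpoint PS (f : nat -> C) (N : nat) : C :=
  match N with O => f O | S k => PS f k + f (S k) end.
Lemma toC_partial f N : toC (Cpartial f N) = PS (fun n => toC (f n)) N.
Proof. induction N; simpl; [reflexivity|]. rewrite toC_add, IHN. reflexivity. Qed.
Lemma PS_ext f g N : (forall n, f n = g n) -> PS f N = PS g N.
Proof. intro H; induction N; simpl; rewrite ?IHN; rewrite H; reflexivity. Qed.

Lemma Un_cv_ext u v l : (forall n, u n = v n) -> Un_cv u l -> Un_cv v l.
Proof. intros H. rewrite <- !is_lim_seq_Reals. apply is_lim_seq_ext; exact H. Qed.

Definition ccv (s : nat -> C) (l : C) : Prop :=
  Un_cv (fun n => fst (s n)) (fst l) /\ Un_cv (fun n => snd (s n)) (snd l).

Lemma F32_ccv c q a b x L :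
  F32_cv (Cnat 1) c q a b x L <->
  ccv (PS (TC (toC c) (toC q) (toC a) (toC b) (toC x))) (toC L).
Proof.
  assert (E : forall N, toC (Cpartial (F32_term (Cnat 1) c q a b x) N)
     = PS (TC (toC c) (toC q) (toC a) (toC b) (toC x)) N).
  { intro N. rewrite toC_partial. apply PS_ext. intro n. apply term_TC. }
  unfold F32_cv, Cseries_cv, ccv. split; intros [H1 H2]; split.
  - eapply Un_cv_ext; [|exact H1]. intro N. simpl. rewrite <- E. reflexivity.
  - eapply Un_cv_ext; [|exact H2]. intro N. simpl. rewrite <- E. reflexivity.
  - eapply Un_cv_ext; [|exact H1]. intro N. simpl. rewrite <- E. reflexivity.
  - eapply Un_cv_ext; [|exact H2]. intro N. simpl. rewrite <- E. reflexivity.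
Qed.

Lemma ccv_ext s t l : (forall n, s n = t n) -> ccv s l -> ccv t l.
Proof.
  intros H [H1 H2]; split.
  - eapply Un_cv_ext; [|exact H1]. intro n; simpl; rewrite H; reflexivity.
  - eapply Un_cv_ext; [|exact H2]. intro n; simpl; rewrite H; reflexivity.
Qed.

Lemma ccv_add s t l m : ccv s l -> ccv t m -> ccv (fun n => (s n + t n)%C) (l + m)%C.
Proof.
  intros [H1 H2] [H3 H4]. rewrite <- is_lim_seq_Reals in *. split; rewrite <- is_lim_seq_Reals; simpl.
  - apply is_lim_seq_plus'; assumption.
  - apply is_lim_seq_plus'; assumption.
Qed.

Lemma ccv_scal k s l : ccv s l -> ccv (fun n => (k * s n)%C) (k * l)%C.
Proof.
  intros [H1 H2]. rewrite <- is_lim_seq_Reals in *. split; rewrite <- is_lim_seq_Reals; simpl.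
  - apply is_lim_seq_minus'; apply is_lim_seq_mult'; try assumption; apply is_lim_seq_const.
  - apply is_lim_seq_plus'; apply is_lim_seq_mult'; try assumption; apply is_lim_seq_const.
Qed.

Lemma ccv_const k : ccv (fun _ => k) k.
Proof. split; rewrite <- is_lim_seq_Reals; apply is_lim_seq_const. Qed.

Lemma ccv_unique s l m : ccv s l -> ccv s m -> l = m.
Proof.
  intros [H1 H2] [H3 H4]. rewrite <- is_lim_seq_Reals in *.
  apply is_lim_seq_unique in H1, H2, H3, H4.
  destruct l, m; simpl in *. rewrite H1 in H3. rewrite H2 in H4.
  inversion H3; inversion H4; reflexivity.
Qed.
Local Open Scope C_scope.
Definition NZ (a : C) := forall n, a + RtoC (INR n) <> RtoC 0.

Lemma NZ_poch a n : NZ a -> pochC a n <> RtoC 0.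
Proof.
  intro H; induction n; simpl pochC.
  - apply RtoC_neq. lra.
  - apply Cmult_neq_0; auto.
Qed.

Lemma NZ_of a : ~ nonpos_int a -> NZ (toC a).
Proof.
  intros H n E. apply H. exists n. apply toC_inj. destruct a as [ar ai].
  unfold toC in *; simpl in *. inversion E.
  unfold Defs.Copp, Cnat, Defs.RtoC; simpl. f_equal; lra.
Qed.

Lemma NZ_ne0 a : NZ a -> a <> RtoC 0.
Proof. intros H E. apply (H 0%nat). rewrite E. simpl. change (INR 0) with 0%R. apply injective_projections; simpl; ring. Qed.

Lemma INRS n : RtoC (INR (S n)) = RtoC (INR n) + RtoC 1.
Proof. rewrite S_INR, RtoC_plus. reflexivity. Qed.

Lemma REC c q a b x n : NZ a -> NZ b ->
  TC c q a b x (S n) * ((a + RtoC (INR n)) * (b + RtoC (INR n)))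
  = TC c q a b x n * ((c + RtoC (INR n)) * (q + RtoC (INR n))) * x.
Proof.
  intros Ha Hb. unfold TC. simpl pochC. simpl powC.
  field. repeat split; auto using NZ_poch.
Qed.

Lemma poch_shift q n : pochC (q + RtoC 1) n * q = pochC q n * (q + RtoC (INR n)).
Proof.
  induction n; simpl pochC.
  - change (INR 0) with 0%R. ring.
  - rewrite INRS. transitivity (pochC (q + RtoC 1) n * q * (q + RtoC 1 + RtoC (INR n))); [ring|].
    rewrite IHn. ring.
Qed.

Lemma Q1 c q a b x n : q * TC c (q + RtoC 1) a b x n = (q + RtoC (INR n)) * TC c q a b x n.
Proof.
  unfold TC.
  transitivity (pochC c n * powC x n * / (pochC a n * pochC b n) * (pochC (q + RtoC 1) n * q)); [ring|].
  rewrite poch_shift. ring.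
Qed.

Lemma A1 c q a0 a1 b x n : a0 = a1 + RtoC 1 -> NZ a0 -> NZ a1 -> NZ b ->
  a1 * TC c q a1 b x n = (a1 + RtoC (INR n)) * TC c q a0 b x n.
Proof.
  intros E H0 H1 Hb.
  assert (P : pochC a0 n = pochC a1 n * (a1 + RtoC (INR n)) * / a1).
  { rewrite E. rewrite <- poch_shift. field. apply NZ_ne0; auto. }
  pose proof (NZ_poch _ n H0) as P0. unfold TC. rewrite P in P0 |- *.
  field. repeat split; auto using NZ_poch, NZ_ne0.
Qed.
Lemma TC0 c q a b x : TC c q a b x 0 = RtoC 1.
Proof. unfold TC; simpl. field. Qed.

Lemma C1ne0 : RtoC 1 <> RtoC 0. Proof. apply RtoC_neq; lra. Qed.

Lemma step1 (a b c q x n t0 t0' t1' t2' : C) :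
  q * t1' = (q + n + 1) * t0' ->
  q * (1 + q) * t2' = (q + n + 1) * (q + n + 1 + 1) * t0' ->
  t0' * ((a + n) * (b + n)) = t0 * ((c + n) * (q + n)) * x ->
  (a-q-1)*(b-q-1) * t0' + q*(a+b-(1+1+1)-(1+1)*q-(c-q-1)*x) * t1' + q*(1+q)*(1-x) * t2'
  = x*(c+n)*(q+n)*t0 - x*(c+(n+1))*(q+(n+1))*t0'.
Proof.
  intros h1 h2 h3.
  transitivity ((a-q-1)*(b-q-1) * t0' + (a+b-(1+1+1)-(1+1)*q-(c-q-1)*x) * (q * t1')
     + (1-x) * (q*(1+q)*t2')); [ring|].
  rewrite h1, h2.
  replace (x*(c+n)*(q+n)*t0) with (t0 * ((c + n) * (q + n)) * x) by ring.
  rewrite <- h3. ring.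
Qed.

Lemma ID1 a b c q x : NZ a -> NZ b -> forall N,
  (a-q-1)*(b-q-1) * PS (TC c q a b x) N
  + q*(a+b-(1+1+1)-(1+1)*q-(c-q-1)*x) * PS (TC c (q+1) a b x) N
  + q*(1+q)*(1-x) * PS (TC c (q+1+1) a b x) N
  = (a-1)*(b-1) - x*(c+RtoC (INR N))*(q+RtoC (INR N))*TC c q a b x N.
Proof.
  intros Ha Hb N. induction N.
  - simpl PS. rewrite !TC0. change (INR 0) with 0%R. ring.
  - cbn [PS].
    set (t0 := TC c q a b x N). set (t0' := TC c q a b x (S N)).
    set (t1' := TC c (q+1) a b x (S N)). set (t2' := TC c (q+1+1) a b x (S N)).
    set (n := RtoC (INR N)).
    assert (h1 : q * t1' = (q + n + 1) * t0').
    { unfold t1', t0'. rewrite Q1, INRS. fold n. ring. }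
    assert (h2 : q * (1 + q) * t2' = (q + n + 1) * (q + n + 1 + 1) * t0').
    { unfold t2'. transitivity (q * ((q+1) * TC c (q + 1 + 1) a b x (S N))); [ring|].
      rewrite Q1, INRS. fold n. fold t1'.
      transitivity ((q + 1 + n + 1) * (q * t1')); [ring|]. rewrite h1. ring. }
    assert (h3 := REC c q a b x N Ha Hb). fold t0 t0' n in h3.
    pose proof (step1 a b c q x n t0 t0' t1' t2' h1 h2 h3) as S1.
    rewrite INRS. fold n.
    transitivity (((a-q-1)*(b-q-1) * PS (TC c q a b x) N
      + q*(a+b-(1+1+1)-(1+1)*q-(c-q-1)*x) * PS (TC c (q+1) a b x) N
      + q*(1+q)*(1-x) * PS (TC c (q+1+1) a b x) N)
      + ((a-q-1)*(b-q-1) * t0' + q*(a+b-(1+1+1)-(1+1)*q-(c-q-1)*x) * t1' + q*(1+q)*(1-x) * t2')); [ring|].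
    rewrite IHN, S1. fold n t0. ring.
Qed.
Lemma step2 (a b c q x n tu tu' tv' tw' : C) :
  (a-(1+1))*(a-1)*tv' = (a-(1+1)+n+1)*(a-1+n+1)*tu' ->
  (a-1)*tw' = (a-1+n+1)*tu' ->
  tu' * ((a + n) * (b + n)) = tu * ((c + n) * (q + n)) * x ->
  (a-(1+1))*(a-1)*(1-x)*tv' + (a-1)*(((1+1)*a-c-q-(1+1+1))*x - a + b + 1)*tw'
   - (a-q-1)*(a-c-1)*x*tu'
  = x*(c+n)*(q+n)*tu - x*(c+(n+1))*(q+(n+1))*tu'.
Proof.
  intros h1 h2 h3.
  transitivity ((1-x)*((a-(1+1))*(a-1)*tv') + (((1+1)*a-c-q-(1+1+1))*x - a + b + 1)*((a-1)*tw')
   - (a-q-1)*(a-c-1)*x*tu'); [ring|].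
  rewrite h1, h2.
  replace (x*(c+n)*(q+n)*tu) with (tu * ((c + n) * (q + n)) * x) by ring.
  rewrite <- h3. ring.
Qed.

Lemma rel2 c q a b x n : NZ a -> NZ (a - 1) -> NZ (a - 1 - 1) -> NZ b ->
  (a-(1+1))*(a-1)*TC c q (a-1-1) b x n = (a-(1+1)+RtoC (INR n))*(a-1+RtoC (INR n))*TC c q a b x n
  /\ (a-1)*TC c q (a-1) b x n = (a-1+RtoC (INR n))*TC c q a b x n.
Proof.
  intros H0 H1 H2 Hb.
  assert (e1 : (a-1)*TC c q (a-1) b x n = (a-1+RtoC (INR n))*TC c q a b x n).
  { apply A1; auto. ring. }
  split; [|exact e1].
  transitivity ((a-1) * ((a-1-1) * TC c q (a-1-1) b x n)); [ring|].
  rewrite (A1 c q (a-1) (a-1-1) b x n); auto; [|ring].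
  transitivity ((a-1-1+RtoC (INR n)) * ((a-1) * TC c q (a-1) b x n)); [ring|].
  rewrite e1. ring.
Qed.

Lemma ID2 a b c q x : NZ a -> NZ (a - 1) -> NZ (a - 1 - 1) -> NZ b -> forall N,
  (a-(1+1))*(a-1)*(1-x)*PS (TC c q (a-1-1) b x) N
  + (a-1)*(((1+1)*a-c-q-(1+1+1))*x - a + b + 1)*PS (TC c q (a-1) b x) N
  - (a-q-1)*(a-c-1)*x*PS (TC c q a b x) N
  = (a-1)*(b-1) - x*(c+RtoC (INR N))*(q+RtoC (INR N))*TC c q a b x N.
Proof.
  intros H0 H1 H2 Hb N. induction N.
  - simpl PS. rewrite !TC0. change (INR 0) with 0%R. ring.
  - cbn [PS].
    set (tu := TC c q a b x N). set (tu' := TC c q a b x (S N)).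
    set (tw' := TC c q (a-1) b x (S N)). set (tv' := TC c q (a-1-1) b x (S N)).
    set (n := RtoC (INR N)).
    destruct (rel2 c q a b x (S N) H0 H1 H2 Hb) as [r1 r2].
    rewrite INRS in r1, r2. fold n tu' tv' tw' in r1, r2.
    assert (h1 : (a-(1+1))*(a-1)*tv' = (a-(1+1)+n+1)*(a-1+n+1)*tu').
    { rewrite r1. ring. }
    assert (h2 : (a-1)*tw' = (a-1+n+1)*tu'). { rewrite r2. ring. }
    assert (h3 := REC c q a b x N H0 Hb). fold tu tu' n in h3.
    pose proof (step2 a b c q x n tu tu' tv' tw' h1 h2 h3) as S1.
    rewrite INRS. fold n.
    transitivity (((a-(1+1))*(a-1)*(1-x)*PS (TC c q (a-1-1) b x) N
      + (a-1)*(((1+1)*a-c-q-(1+1+1))*x - a + b + 1)*PS (TC c q (a-1) b x) N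
      - (a-q-1)*(a-c-1)*x*PS (TC c q a b x) N)
      + ((a-(1+1))*(a-1)*(1-x)*tv' + (a-1)*(((1+1)*a-c-q-(1+1+1))*x - a + b + 1)*tw'
         - (a-q-1)*(a-c-1)*x*tu')); [ring|].
    rewrite IHN, S1. fold n tu. ring.
Qed.

Lemma bd1 a b c q x n :
  x*(c+RtoC (INR n))*(q+RtoC (INR n))*TC c q a b x n
  = x*(q*(c-q-1)*TC c (q+1) a b x n + q*(1+q)*TC c (q+1+1) a b x n).
Proof.
  assert (h1 := Q1 c q a b x n).
  assert (h2 := Q1 c (q+1) a b x n).
  transitivity (x*((c-q-1)*(q*TC c (q+1) a b x n) + q*((q+1)*TC c (q+1+1) a b x n))); [|ring].
  rewrite h2. transitivity (x*((c-q-1 + (q+1+RtoC (INR n)))*(q*TC c (q+1) a b x n))); [|ring].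
  rewrite h1. ring.
Qed.

Lemma bd2 a b c q x n : NZ a -> NZ (a - 1) -> NZ (a - 1 - 1) -> NZ b ->
  x*(c+RtoC (INR n))*(q+RtoC (INR n))*TC c q a b x n
  = x*((a-(1+1))*(a-1)*TC c q (a-1-1) b x n
       - (a-1)*((1+1)*a-c-q-(1+1+1))*TC c q (a-1) b x n
       + (a-q-1)*(a-c-1)*TC c q a b x n).
Proof.
  intros H0 H1 H2 Hb. destruct (rel2 c q a b x n H0 H1 H2 Hb) as [r1 r2].
  transitivity (x*(((a-(1+1))*(a-1)*TC c q (a-1-1) b x n)
       - ((1+1)*a-c-q-(1+1+1))*((a-1)*TC c q (a-1) b x n)
       + (a-q-1)*(a-c-1)*TC c q a b x n)); [|ring].
  rewrite r1, r2. ring.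
Qed.
Local Open Scope R_scope.

Lemma fst_PS f N : fst (PS f N) = sum_f_R0 (fun n => fst (f n)) N.
Proof. induction N; simpl; [reflexivity|]. rewrite IHN. reflexivity. Qed.
Lemma snd_PS f N : snd (PS f N) = sum_f_R0 (fun n => snd (f n)) N.
Proof. induction N; simpl; [reflexivity|]. rewrite IHN. reflexivity. Qed.

Lemma ccv_of_series (f : nat -> C) :
  ex_series (fun n => fst (f n)) -> ex_series (fun n => snd (f n)) -> exists l, ccv (PS f) l.
Proof.
  intros [l1 H1] [l2 H2]. exists (l1, l2). rewrite is_series_Reals in H1, H2.
  split; simpl.
  - eapply Un_cv_ext; [|exact H1]. intro; cbv beta; rewrite fst_PS; reflexivity.
  - eapply Un_cv_ext; [|exact H2]. intro; cbv beta; rewrite snd_PS; reflexivity.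
Qed.

Lemma ccv_terms (f : nat -> C) l : ccv (PS f) l -> ccv f (RtoC 0).
Proof.
  intros [H1 H2]. split; simpl; rewrite <- is_lim_seq_Reals; apply ex_series_lim_0.
  - exists (fst l). rewrite is_series_Reals. eapply Un_cv_ext; [|exact H1].
    intro; cbv beta; rewrite fst_PS; reflexivity.
  - exists (snd l). rewrite is_series_Reals. eapply Un_cv_ext; [|exact H2].
    intro; cbv beta; rewrite snd_PS; reflexivity.
Qed.

Lemma cmod_lb z n : INR n - Cmod z <= Cmod (z + RtoC (INR n))%C.
Proof.
  assert (E : RtoC (INR n) = ((z + RtoC (INR n)) + - z)%C) by ring.
  pose proof (Cmod_triangle (z + RtoC (INR n)) (- z)) as T.
  rewrite <- E, Cmod_opp, Cmod_R, Rabs_pos_eq in T; [lra|]. apply pos_INR.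
Qed.
Lemma cmod_ub z n : Cmod (z + RtoC (INR n))%C <= Cmod z + INR n.
Proof.
  pose proof (Cmod_triangle z (RtoC (INR n))) as T.
  rewrite Cmod_R, Rabs_pos_eq in T; [lra|]. apply pos_INR.
Qed.

Lemma ratio_ineq (n M X : R) : 0 <= M -> 0 <= X < 1 -> 2*M+1 <= n -> 32*M/(1-X) <= n ->
  (n+M)*(n+M)*X <= (1+X)/2 * ((n-M)*(n-M)).
Proof.
  intros HM HX H1 H2.
  assert (H3 : 32*M <= n*(1-X)).
  { apply Rmult_le_compat_r with (r := 1-X) in H2; [|lra].
    unfold Rdiv in H2. rewrite Rmult_assoc, Rinv_l in H2; lra. }
  assert (H4 : n*n/4 <= (n-M)*(n-M)) by nra.
  nra.
Qed.

Lemma conv_cplx c q a b x : NZ a -> NZ b -> Cmod x < 1 ->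
  exists l, ccv (PS (TC c q a b x)) l.
Proof.
  intros Ha Hb Hx. set (T := TC c q a b x).
  set (M := Cmod a + Cmod b + Cmod c + Cmod q). set (X := Cmod x). set (r := (1+X)/2).
  assert (HM : 0 <= M) by (unfold M; pose proof (Cmod_ge_0 a); pose proof (Cmod_ge_0 b);
     pose proof (Cmod_ge_0 c); pose proof (Cmod_ge_0 q); lra).
  assert (HX : 0 <= X < 1) by (split; [apply Cmod_ge_0|exact Hx]).
  destruct (big_nat (2*M+1 + 32*M/(1-X))) as [N0 HN0].
  assert (Hrat : forall n, (N0 <= n)%nat -> Cmod (T (S n)) <= r * Cmod (T n)).
  { intros n Hn. specialize (HN0 n Hn).
    assert (HMX : 0 <= 32*M/(1-X)) by (apply Rdiv_le_0_compat; lra).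
    pose proof (REC c q a b x n Ha Hb) as E. fold T in E.
    apply (f_equal Cmod) in E. rewrite !Cmod_mult in E. fold X in E.
    pose proof (cmod_lb a n). pose proof (cmod_lb b n).
    pose proof (cmod_ub c n). pose proof (cmod_ub q n).
    pose proof (Cmod_ge_0 c); pose proof (Cmod_ge_0 q);
    pose proof (Cmod_ge_0 a); pose proof (Cmod_ge_0 b).
    pose proof (Cmod_ge_0 (c + RtoC (INR n))%C). pose proof (Cmod_ge_0 (q + RtoC (INR n))%C).
    pose proof (Cmod_ge_0 (T n)). pose proof (Cmod_ge_0 (T (S n))).
    set (A' := Cmod (a + RtoC (INR n))%C) in *. set (B' := Cmod (b + RtoC (INR n))%C) in *.
    set (C' := Cmod (c + RtoC (INR n))%C) in *. set (Q' := Cmod (q + RtoC (INR n))%C) in *.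
    set (t := Cmod (T n)) in *. set (t' := Cmod (T (S n))) in *.
    pose proof (ratio_ineq (INR n) M X HM HX ltac:(lra) ltac:(lra)) as RI. fold r in RI.
    assert (hA : INR n - M <= A') by (unfold M in *; lra).
    assert (hB : INR n - M <= B') by (unfold M in *; lra).
    assert (hC : C' <= INR n + M) by (unfold M in *; lra).
    assert (hQ : Q' <= INR n + M) by (unfold M in *; lra).
    assert (hpos : 1 <= INR n - M) by lra.
    assert (hAB : (INR n - M)*(INR n - M) <= A'*B') by nra.
    assert (hCQ : C'*Q' <= (INR n + M)*(INR n + M)) by nra.
    assert (hr : 0 <= r) by (unfold r; lra).
    assert (K1 : t' * (A' * B') <= r * t * (A' * B')).
    { rewrite E. apply Rle_trans with (t * ((INR n + M)*(INR n + M)) * X).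
      - apply Rmult_le_compat_r; [lra|]. apply Rmult_le_compat_l; lra.
      - apply Rle_trans with (t * (r * ((INR n - M)*(INR n - M)))).
        + rewrite Rmult_assoc. apply Rmult_le_compat_l; lra.
        + rewrite <- Rmult_assoc, (Rmult_comm t r). apply Rmult_le_compat_l; [nra|lra]. }
    apply Rmult_le_reg_r with (A'*B'); [nra|lra]. }
  assert (Hgeo : forall k, Cmod (T (N0 + k)%nat) <= Cmod (T N0) * r ^ k).
  { induction k.
    - rewrite Nat.add_0_r. simpl. lra.
    - rewrite Nat.add_succ_r. eapply Rle_trans; [apply Hrat; lia|].
      simpl. assert (0 <= r) by (unfold r; lra). nra. }
  assert (Hm : ex_series (fun n => Cmod (T n))).
  { apply (ex_series_incr_n _ N0).
    apply (@ex_series_le R_AbsRing R_CompleteNormedModule) with (b := fun k => Cmod (T N0) * r ^ k).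
    - intro k. change (norm (Cmod (T (N0 + k)%nat))) with (Rabs (Cmod (T (N0 + k)%nat))).
      rewrite Rabs_pos_eq; [apply Hgeo|apply Cmod_ge_0].
    - apply (ex_series_scal_l (Cmod (T N0)) (fun k => r ^ k)).
      apply ex_series_geom. rewrite Rabs_pos_eq; unfold r; lra. }
  apply ccv_of_series.
  - apply ex_series_Rabs. apply (@ex_series_le R_AbsRing R_CompleteNormedModule) with (b := fun n => Cmod (T n)); [|exact Hm].
    intro n. change (norm (Rabs (fst (T n)))) with (Rabs (Rabs (fst (T n)))).
    rewrite Rabs_Rabsolu. eapply Rle_trans; [apply Rmax_l|apply Rmax_Cmod].
  - apply ex_series_Rabs. apply (@ex_series_le R_AbsRing R_CompleteNormedModule) with (b := fun n => Cmod (T n)); [|exact Hm].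
    intro n. change (norm (Rabs (snd (T n)))) with (Rabs (Rabs (snd (T n)))).
    rewrite Rabs_Rabsolu. eapply Rle_trans; [apply Rmax_r|apply Rmax_Cmod].
Qed.
Lemma real_ratio (g : nat -> R) (al be ga de e : R) :
  (forall n, g (S n) * ((al + INR n) * (be + INR n)) = g n * ((ga + INR n) * (de + INR n))) ->
  0 <= e -> e < al + be - ga - de ->
  exists N0, forall n, (N0 <= n)%nat -> (INR n + e) * Rabs (g (S n)) <= INR n * Rabs (g n).
Proof.
  intros Hrec He Hs.
  set (s := al + be - ga - de - e).
  set (P := al*be - e*(ga+de) - ga*de). set (Q := e*ga*de).
  destruct (big_nat (Rabs al + Rabs be + Rabs ga + Rabs de + (Rabs P + Rabs Q)/s + 1)) as [N0 HN].
  exists N0. intros n Hn. specialize (HN n Hn). specialize (Hrec n).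
  set (m := INR n) in *.
  assert (Hs0 : 0 < s) by (unfold s; lra).
  assert (HPQ : 0 <= (Rabs P + Rabs Q)/s) by (apply Rdiv_le_0_compat; [pose proof (Rabs_pos P); pose proof (Rabs_pos Q); lra|lra]).
  pose proof (Rabs_pos al); pose proof (Rabs_pos be); pose proof (Rabs_pos ga); pose proof (Rabs_pos de).
  pose proof (Rle_abs (-al)); pose proof (Rle_abs (-be)); pose proof (Rle_abs (-ga)); pose proof (Rle_abs (-de)).
  rewrite Rabs_Ropp in *.
  assert (h1 : 0 < al + m) by lra. assert (h2 : 0 < be + m) by lra.
  assert (h3 : 0 <= ga + m) by lra. assert (h4 : 0 <= de + m) by lra.
  assert (hm1 : 1 <= m) by lra.
  assert (hm : Rabs P + Rabs Q <= s * m).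
  { assert (Rabs P + Rabs Q = s * ((Rabs P + Rabs Q)/s)) by (field; lra). nra. }
  pose proof (Rle_abs P); pose proof (Rle_abs (-P)); pose proof (Rle_abs Q); rewrite Rabs_Ropp in *.
  assert (poly : (m + e) * ((ga + m) * (de + m)) <= m * ((al + m) * (be + m))).
  { assert (E : m * ((al + m) * (be + m)) - (m + e) * ((ga + m) * (de + m)) = s*m*m + P*m - Q)
      by (unfold s, P, Q; ring).
    assert (X1 : (Rabs P + Rabs Q) * m <= s*m*m) by nra.
    assert (X2 : - Rabs P * m <= P * m) by nra.
    assert (X3 : Rabs Q <= Rabs Q * m) by (pose proof (Rabs_pos Q); nra).
    lra. }
  apply (f_equal Rabs) in Hrec. rewrite !Rabs_mult in Hrec.
  rewrite (Rabs_pos_eq (al+m)), (Rabs_pos_eq (be+m)), (Rabs_pos_eq (ga+m)), (Rabs_pos_eq (de+m)) in Hrec; try lra.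
  pose proof (Rabs_pos (g n)); pose proof (Rabs_pos (g (S n))).
  apply Rmult_le_reg_r with ((al + m) * (be + m)); [nra|].
  replace ((m + e) * Rabs (g (S n)) * ((al + m) * (be + m))) with ((m+e) * (Rabs (g (S n)) * ((al + m) * (be + m)))) by ring.
  rewrite Hrec. nra.
Qed.

Lemma raabe (s : nat -> R) (d : R) (N0 : nat) :
  (forall n, 0 <= s n) -> 0 < d ->
  (forall n, (N0 <= n)%nat -> (INR n + 1 + d) * s (S n) <= INR n * s n) -> ex_series s.
Proof.
  intros Hpos Hd H. set (u := fun k => s (S N0 + k)%nat).
  assert (Hb : forall k, d * sum_f_R0 u k + INR (S N0 + k) * s (S N0 + k)%nat <= INR N0 * s N0).
  { induction k.
    - simpl sum_f_R0. unfold u. rewrite Nat.add_0_r. specialize (H N0 (le_n _)).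
      rewrite S_INR. lra.
    - simpl sum_f_R0. specialize (H (S N0 + k)%nat ltac:(lia)).
      replace (S N0 + S k)%nat with (S (S N0 + k)) by lia. unfold u at 2.
      replace (S N0 + S k)%nat with (S (S N0 + k)) by lia.
      rewrite S_INR. lra. }
  assert (Hub : forall k, sum_f_R0 u k <= INR N0 * s N0 / d).
  { intro k. specialize (Hb k). pose proof (pos_INR (S N0 + k)). pose proof (Hpos (S N0 + k)%nat).
    apply Rmult_le_reg_l with d; [lra|]. unfold Rdiv.
    replace (d * (INR N0 * s N0 * / d)) with (INR N0 * s N0) by (field; lra). nra. }
  destruct (growing_cv (sum_f_R0 u)) as [l Hl].
  - intro n. simpl. pose proof (Hpos (S N0 + S n)%nat). unfold u. lra.
  - exists (INR N0 * s N0 / d). intros y [i ->]. apply Hub.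
  - apply (ex_series_incr_n s (S N0)). exists l. apply is_series_Reals. exact Hl.
Qed.

Lemma bernoulli (m e : R) (k : nat) : 0 <= m -> 0 <= e ->
  m ^ k * (m + INR k * e) <= m * (m + e) ^ k.
Proof.
  intros Hm He. induction k.
  - simpl. lra.
  - rewrite S_INR. simpl.
    pose proof (pow_le m k Hm). pose proof (pow_le (m+e) k ltac:(lra)).
    assert (0 <= INR k) by apply pos_INR.
    assert (IH2 : m ^ k * (m + INR k * e) * (m + e) <= m * (m + e) ^ k * (m+e)) by nra.
    assert (D : m ^ k * (m + INR k * e) * (m + e) - m * m ^ k * (m + (INR k + 1) * e) = m^k * (INR k * e * e)) by ring.
    assert (0 <= m^k*(INR k*e*e)) by (apply Rmult_le_pos; [auto| nra]).
    assert (E2 : m*((m+e)*(m+e)^k) = m*(m+e)^k*(m+e)) by ring.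
    lra.
Qed.

Lemma terms_to_0 (g : nat -> R) (al be ga de : R) :
  (forall n, g (S n) * ((al + INR n) * (be + INR n)) = g n * ((ga + INR n) * (de + INR n))) ->
  0 < al + be - ga - de -> is_lim_seq g 0.
Proof.
  intros Hrec Hs. set (e := (al + be - ga - de)/2).
  destruct (real_ratio g al be ga de e Hrec ltac:(unfold e; lra) ltac:(unfold e; lra)) as [N0 HN0].
  destruct (big_nat (2/e)) as [k Hk]. specialize (Hk k (le_n _)).
  assert (He : 0 < e) by (unfold e; lra).
  assert (Hke : 2 <= INR k * e).
  { apply Rmult_le_compat_r with (r := e) in Hk; [|lra]. unfold Rdiv in Hk.
    rewrite Rmult_assoc, Rinv_l in Hk; lra. }
  set (s := fun n => Rabs (g n) ^ k).
  assert (Hser : ex_series s).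
  { apply (raabe s 1 (Nat.max N0 1)).
    - intro n. apply pow_le, Rabs_pos.
    - lra.
    - intros n Hn. specialize (HN0 n ltac:(lia)).
      assert (Hn1 : 1 <= INR n) by (apply (le_INR 1); lia).
      set (m := INR n) in *.
      pose proof (Rabs_pos (g n)); pose proof (Rabs_pos (g (S n))).
      assert (P1 : ((m + e) * Rabs (g (S n))) ^ k <= (m * Rabs (g n)) ^ k).
      { apply pow_incr. split; [nra|exact HN0]. }
      rewrite !Rpow_mult_distr in P1.
      pose proof (bernoulli m e k ltac:(lra) ltac:(lra)) as B.
      unfold s. pose proof (pow_le (Rabs (g (S n))) k ltac:(lra)) as G1.
      pose proof (pow_le (Rabs (g n)) k ltac:(lra)) as G0.
      pose proof (pow_lt m k ltac:(lra)) as Mk.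
      assert (B2 : m ^ k * ((m + INR k * e) * Rabs (g (S n)) ^ k) <= m ^ k * (m * Rabs (g n) ^ k)).
      { apply Rle_trans with (m * (m + e) ^ k * Rabs (g (S n)) ^ k); [nra|].
        nra. }
      apply Rmult_le_reg_l in B2; [|exact Mk]. nra. }
  apply ex_series_lim_0 in Hser. rewrite is_lim_seq_Reals in Hser |- *.
  intros eps Heps. destruct (Hser (eps ^ k) (pow_lt _ _ Heps)) as [N HN].
  exists N. intros n Hn. specialize (HN n Hn). unfold R_dist in *.
  rewrite Rminus_0_r in *. unfold s in HN. rewrite Rabs_pos_eq in HN by (apply pow_le, Rabs_pos).
  destruct (Rlt_or_le (Rabs (g n)) eps) as [L|L]; [exact L|].
  exfalso. assert (eps ^ k <= Rabs (g n) ^ k) by (apply pow_incr; lra). lra.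
Qed.
Lemma fst_mulR z r : fst (z * RtoC r)%C = fst z * r.
Proof. destruct z; simpl; ring. Qed.
Lemma snd_mulR z r : snd (z * RtoC r)%C = snd z * r.
Proof. destruct z; simpl; ring. Qed.

Lemma NZ_R al n : NZ (RtoC al) -> al + INR n <> 0.
Proof. intros H E. apply (H n). rewrite <- RtoC_plus, E. reflexivity. Qed.

Lemma TC_real al be ga de :
  NZ (RtoC al) -> NZ (RtoC be) ->
  (forall n, snd (TC (RtoC ga) (RtoC de) (RtoC al) (RtoC be) (RtoC 1) n) = 0) /\
  (forall n, fst (TC (RtoC ga) (RtoC de) (RtoC al) (RtoC be) (RtoC 1) (S n)) * ((al + INR n) * (be + INR n))
     = fst (TC (RtoC ga) (RtoC de) (RtoC al) (RtoC be) (RtoC 1) n) * ((ga + INR n) * (de + INR n))).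
Proof.
  intros Ha Hb. set (T := TC (RtoC ga) (RtoC de) (RtoC al) (RtoC be) (RtoC 1)).
  assert (E : forall n, (T (S n) * RtoC ((al + INR n) * (be + INR n)) = T n * RtoC ((ga + INR n) * (de + INR n)))%C).
  { intro n. rewrite !RtoC_mult, !RtoC_plus. pose proof (REC (RtoC ga) (RtoC de) (RtoC al) (RtoC be) (RtoC 1) n Ha Hb) as R.
    fold T in R. rewrite R. ring. }
  split.
  - intro n. induction n.
    + unfold T. rewrite TC0. reflexivity.
    + specialize (E n). apply (f_equal snd) in E. rewrite !snd_mulR, IHn in E.
      pose proof (NZ_R al n Ha). pose proof (NZ_R be n Hb).
      assert (Hp : (al + INR n) * (be + INR n) <> 0) by (apply Rmult_integral_contrapositive; auto).
      apply Rmult_eq_reg_r with ((al + INR n) * (be + INR n)); [|exact Hp]. lra.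
  - intro n. specialize (E n). apply (f_equal fst) in E. rewrite !fst_mulR in E. exact E.
Qed.

Lemma conv_real al be ga de :
  NZ (RtoC al) -> NZ (RtoC be) -> al + be - ga - de > 1 ->
  exists l, ccv (PS (TC (RtoC ga) (RtoC de) (RtoC al) (RtoC be) (RtoC 1))) l.
Proof.
  intros Ha Hb Hs. destruct (TC_real al be ga de Ha Hb) as [Hsnd Hrec].
  set (T := TC (RtoC ga) (RtoC de) (RtoC al) (RtoC be) (RtoC 1)) in *.
  set (e := (1 + (al + be - ga - de))/2).
  destruct (real_ratio (fun n => fst (T n)) al be ga de e Hrec ltac:(unfold e; lra) ltac:(unfold e; lra)) as [N0 HN0].
  assert (Hs1 : ex_series (fun n => Rabs (fst (T n)))).
  { apply (raabe _ (e - 1) N0).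
    - intro; apply Rabs_pos.
    - unfold e; lra.
    - intros n Hn. specialize (HN0 n Hn). simpl in HN0. replace (INR n + 1 + (e - 1)) with (INR n + e) by ring. exact HN0. }
  apply ccv_of_series.
  - apply ex_series_Rabs; exact Hs1.
  - apply ex_series_Rabs. apply (@ex_series_le R_AbsRing R_CompleteNormedModule) with (b := fun n => Rabs (fst (T n))); [|exact Hs1].
    intro n. change (norm (Rabs (snd (T n)))) with (Rabs (Rabs (snd (T n)))).
    rewrite Hsnd, Rabs_R0, Rabs_R0. apply Rabs_pos.
Qed.

Lemma bd_real al be ga de :
  NZ (RtoC al) -> NZ (RtoC be) -> al + be - ga - de > 2 ->
  ccv (fun N => RtoC 1 * (RtoC ga + RtoC (INR N)) * (RtoC de + RtoC (INR N))
                * TC (RtoC ga) (RtoC de) (RtoC al) (RtoC be) (RtoC 1) N)%C (RtoC 0).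
Proof.
  intros Ha Hb Hs. destruct (TC_real al be ga de Ha Hb) as [Hsnd Hrec].
  set (T := TC (RtoC ga) (RtoC de) (RtoC al) (RtoC be) (RtoC 1)) in *.
  assert (EC : forall N, (RtoC 1 * (RtoC ga + RtoC (INR N)) * (RtoC de + RtoC (INR N)) * T N
      = T N * RtoC ((ga + INR N) * (de + INR N)))%C).
  { intro N. rewrite RtoC_mult, !RtoC_plus. ring. }
  set (g := fun n => (al + INR n - 1) * (be + INR n - 1) * fst (T n)).
  assert (Hg : is_lim_seq g 0).
  { apply (terms_to_0 g (al - 1) (be - 1) ga de); [|lra].
    intro n. unfold g. rewrite S_INR.
    replace ((al + (INR n + 1) - 1) * (be + (INR n + 1) - 1) * fst (T (S n)) * ((al - 1 + INR n) * (be - 1 + INR n)))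
      with ((fst (T (S n)) * ((al + INR n) * (be + INR n))) * ((al - 1 + INR n) * (be - 1 + INR n))) by ring.
    rewrite Hrec. ring. }
  apply is_lim_seq_incr_1 in Hg.
  unfold ccv. change (fst (RtoC 0)) with 0. change (snd (RtoC 0)) with 0. split.
  - rewrite <- is_lim_seq_Reals. eapply is_lim_seq_ext; [|exact Hg].
    intro N. cbv beta. rewrite EC, fst_mulR. unfold g. rewrite S_INR.
    replace ((al + (INR N + 1) - 1) * (be + (INR N + 1) - 1) * fst (T (S N)))
      with (fst (T (S N)) * ((al + INR N) * (be + INR N))) by ring.
    rewrite Hrec. ring.
  - rewrite <- is_lim_seq_Reals. eapply is_lim_seq_ext; [|apply is_lim_seq_const].
    intro N. cbv beta. rewrite EC, snd_mulR, Hsnd. ring.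
Qed.
Local Open Scope C_scope.
Definition ofC (l : C) : Cplx := mkC (fst l) (snd l).
Lemma toC_ofC l : toC (ofC l) = l.
Proof. destruct l; reflexivity. Qed.

Lemma combo3 s1 s2 s3 l1 l2 l3 k1 k2 k3 :
  ccv s1 l1 -> ccv s2 l2 -> ccv s3 l3 ->
  ccv (fun n => k1 * s1 n + k2 * s2 n + k3 * s3 n) (k1*l1 + k2*l2 + k3*l3).
Proof.
  intros H1 H2 H3. apply ccv_add; [apply ccv_add|]; apply ccv_scal; assumption.
Qed.

Lemma finish (P Bd : nat -> C) (L K : C) :
  ccv P L -> (forall N, P N = K - Bd N) -> ccv Bd (RtoC 0) -> L = K.
Proof.
  intros HP HE HB.
  assert (H : ccv (fun N => K + (- (1)) * Bd N) (K + (- (1)) * RtoC 0))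
    by (apply ccv_add; [apply ccv_const|apply ccv_scal; exact HB]).
  replace (K + - (1) * RtoC 0) with K in H by ring.
  apply (ccv_unique P); [exact HP|].
  eapply ccv_ext; [|exact H]. intro N. rewrite HE. ring.
Qed.

Lemma ccv_eq s l l' : ccv s l -> l = l' -> ccv s l'.
Proof. intros H ->; exact H. Qed.

Lemma INR1 : RtoC (INR 1) = 1. Proof. reflexivity. Qed.
Lemma INR2 : RtoC (INR 2) = 1 + 1. Proof. simpl. rewrite RtoC_plus. reflexivity. Qed.
Lemma INR3 : RtoC (INR 3) = 1 + 1 + 1. Proof. simpl. rewrite !RtoC_plus. reflexivity. Qed.
Lemma part1 :
  (forall a b c q : Cplx,
     ~ nonpos_int (a - Cnat 2)%Cx -> ~ nonpos_int (a - Cnat 1)%Cx ->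
     ~ nonpos_int a -> ~ nonpos_int b ->
     forall x : Cplx, Cnorm x < 1 ->
     exists Fq Fq1 Fq2 Fam2 Fam1 Fa : Cplx,
       F32_cv (Cnat 1) c q a b x Fq /\
       F32_cv (Cnat 1) c (q + Cnat 1)%Cx a b x Fq1 /\
       F32_cv (Cnat 1) c (q + Cnat 2)%Cx a b x Fq2 /\
       F32_cv (Cnat 1) c q (a - Cnat 2)%Cx b x Fam2 /\
       F32_cv (Cnat 1) c q (a - Cnat 1)%Cx b x Fam1 /\
       F32_cv (Cnat 1) c q a b x Fa /\
       ((a - q - Cnat 1) * (b - q - Cnat 1) * Fq
        + q * (a + b - Cnat 3 - Cnat 2 * q - (c - q - Cnat 1) * x) * Fq1
        + q * (Cnat 1 + q) * (Cnat 1 - x) * Fq2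
        = (a - Cnat 1) * (b - Cnat 1))%Cx /\
       ((a - Cnat 2) * (a - Cnat 1) * (Cnat 1 - x) * Fam2
        + (a - Cnat 1) * ((Cnat 2 * a - c - q - Cnat 3) * x - a + b + Cnat 1) * Fam1
        - (a - q - Cnat 1) * (a - c - Cnat 1) * x * Fa
        = (a - Cnat 1) * (b - Cnat 1))%Cx).
Proof.
  intros a b c q Ha2 Ha1 Ha Hb x Hx.
  apply NZ_of in Ha2, Ha1, Ha, Hb.
  rewrite toC_sub, toC_Cnat, INR2 in Ha2. rewrite toC_sub, toC_Cnat, INR1 in Ha1.
  set (A := toC a) in *. set (B := toC b). set (Cc := toC c). set (Q := toC q). set (X := toC x).
  replace (A - (1 + 1)) with (A - 1 - 1) in Ha2 by ring.
  assert (HX : Cmod X < 1) by exact Hx.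
  destruct (conv_cplx Cc Q A B X Ha Hb HX) as [l0 H0].
  destruct (conv_cplx Cc (Q + 1) A B X Ha Hb HX) as [l1 H1].
  destruct (conv_cplx Cc (Q + 1 + 1) A B X Ha Hb HX) as [l2 H2].
  destruct (conv_cplx Cc Q (A - 1 - 1) B X Ha2 Hb HX) as [lv Hv].
  destruct (conv_cplx Cc Q (A - 1) B X Ha1 Hb HX) as [lw Hw].
  exists (ofC l0), (ofC l1), (ofC l2), (ofC lv), (ofC lw), (ofC l0).
  assert (Eq1 : toC (q + Cnat 1)%Cx = Q + 1) by (rewrite toC_add, toC_Cnat, INR1; reflexivity).
  assert (Eq2 : toC (q + Cnat 2)%Cx = Q + 1 + 1) by (rewrite toC_add, toC_Cnat, INR2; unfold Q; ring).
  assert (Ea2 : toC (a - Cnat 2)%Cx = A - 1 - 1) by (rewrite toC_sub, toC_Cnat, INR2; unfold A; ring).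
  assert (Ea1 : toC (a - Cnat 1)%Cx = A - 1) by (rewrite toC_sub, toC_Cnat, INR1; reflexivity).
  refine (conj _ (conj _ (conj _ (conj _ (conj _ (conj _ (conj _ _))))))).
  - apply F32_ccv. rewrite toC_ofC. exact H0.
  - apply F32_ccv. rewrite toC_ofC, Eq1. exact H1.
  - apply F32_ccv. rewrite toC_ofC, Eq2. exact H2.
  - apply F32_ccv. rewrite toC_ofC, Ea2. exact Hv.
  - apply F32_ccv. rewrite toC_ofC, Ea1. exact Hw.
  - apply F32_ccv. rewrite toC_ofC. exact H0.
  - apply toC_inj. repeat (rewrite toC_add || rewrite toC_mul || rewrite toC_sub || rewrite toC_Cnat || rewrite toC_ofC).
    rewrite INR1, INR2, INR3. fold A B Cc Q X.
    eapply finish.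
    + apply (combo3 _ _ _ _ _ _ ((A - Q - 1) * (B - Q - 1))
              (Q * (A + B - (1 + 1 + 1) - (1 + 1) * Q - (Cc - Q - 1) * X))
              (Q * (1 + Q) * (1 - X)) H0 H1 H2).
    + intro N. cbv beta. rewrite (ID1 A B Cc Q X Ha Hb N). reflexivity.
    + eapply ccv_eq.
      * eapply ccv_ext; [intro N; symmetry; apply bd1|].
        apply ccv_scal. apply ccv_add; apply ccv_scal; eapply ccv_terms; eassumption.
      * ring.
  - apply toC_inj. repeat (rewrite toC_add || rewrite toC_mul || rewrite toC_sub || rewrite toC_Cnat || rewrite toC_ofC).
    rewrite INR1, INR2, INR3. fold A B Cc Q X.
    eapply (finish _ (fun N => X * (Cc + RtoC (INR N)) * (Q + RtoC (INR N)) * TC Cc Q A B X N)).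
    + eapply ccv_eq; [apply (combo3 _ _ _ _ _ _ ((A - (1 + 1)) * (A - 1) * (1 - X))
              ((A - 1) * (((1 + 1) * A - Cc - Q - (1 + 1 + 1)) * X - A + B + 1))
              (- ((A - Q - 1) * (A - Cc - 1) * X)) Hv Hw H0)|ring].
    + intro N. cbv beta. rewrite <- (ID2 A B Cc Q X Ha Ha1 Ha2 Hb N). ring.
    + eapply ccv_eq.
      * apply (ccv_ext (fun N => X * ((A-(1+1))*(A-1)*TC Cc Q (A-1-1) B X N
            + (- ((A-1)*((1+1)*A-Cc-Q-(1+1+1))))*TC Cc Q (A-1) B X N
            + (A-Q-1)*(A-Cc-1)*TC Cc Q A B X N))).
        { intro N. rewrite (bd2 A B Cc Q X N Ha Ha1 Ha2 Hb). ring. }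
        apply ccv_scal. apply ccv_add; [apply ccv_add|]; apply ccv_scal; eapply ccv_terms; eassumption.
      * ring.
Qed.
Lemma R2C : RtoC 2 = 1 + 1.
Proof. rewrite <- RtoC_plus. replace (1+1)%R with 2%R by lra. reflexivity. Qed.

Lemma part2 :
  (forall a b c q : R,
     ~ nonpos_int (Defs.RtoC (a - 2)) -> ~ nonpos_int (Defs.RtoC (a - 1)) ->
     ~ nonpos_int (Defs.RtoC a) -> ~ nonpos_int (Defs.RtoC b) ->
     (a + b > c + q + 2)%R ->
     exists Fq Fq1 Fam1 Fa : Cplx,
       F32_cv (Cnat 1) (Defs.RtoC c) (Defs.RtoC q) (Defs.RtoC a) (Defs.RtoC b) (Cnat 1) Fq /\
       F32_cv (Cnat 1) (Defs.RtoC c) (Defs.RtoC (q + 1)) (Defs.RtoC a) (Defs.RtoC b) (Cnat 1) Fq1 /\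
       F32_cv (Cnat 1) (Defs.RtoC c) (Defs.RtoC q) (Defs.RtoC (a - 1)) (Defs.RtoC b) (Cnat 1) Fam1 /\
       F32_cv (Cnat 1) (Defs.RtoC c) (Defs.RtoC q) (Defs.RtoC a) (Defs.RtoC b) (Cnat 1) Fa /\
       (Defs.RtoC ((a - q - 1) * (b - q - 1)) * Fq
        + Defs.RtoC (q * (a + b - c - 2 - q)) * Fq1
        = Defs.RtoC ((a - 1) * (b - 1)))%Cx /\
       (Defs.RtoC ((a - 1) * (a + b - c - q - 2)) * Fam1
        - Defs.RtoC ((a - q - 1) * (a - c - 1)) * Fa
        = Defs.RtoC ((a - 1) * (b - 1)))%Cx).
Proof.
  intros a b c q Ha2 Ha1 Ha Hb Hs.
  apply NZ_of in Ha2, Ha1, Ha, Hb. rewrite toC_RtoC in Ha2, Ha1, Ha, Hb.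
  destruct (conv_real a b c q Ha Hb ltac:(lra)) as [l0 H0].
  destruct (conv_real a b c (q + 1) Ha Hb ltac:(lra)) as [l1 H1].
  destruct (conv_real (a - 1) b c q Ha1 Hb ltac:(lra)) as [lw Hw].
  pose proof (bd_real a b c q Ha Hb ltac:(lra)) as Bd.
  exists (ofC l0), (ofC l1), (ofC lw), (ofC l0).
  refine (conj _ (conj _ (conj _ (conj _ (conj _ _))))).
  - apply F32_ccv. rewrite toC_ofC. exact H0.
  - apply F32_ccv. rewrite toC_ofC. exact H1.
  - apply F32_ccv. rewrite toC_ofC. exact Hw.
  - apply F32_ccv. rewrite toC_ofC. exact H0.
  - rewrite RtoC_plus in H1. replace (RtoC (a - 2)) with (RtoC a - 1 - 1) in Ha2
      by (rewrite <- !RtoC_minus; f_equal; lra).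
    rewrite RtoC_minus in Ha1, Hw.
    apply toC_inj. repeat (rewrite toC_add || rewrite toC_mul || rewrite toC_sub || rewrite toC_ofC || rewrite toC_RtoC).
    rewrite !RtoC_mult, !RtoC_minus, !RtoC_plus, R2C.
    eapply (finish _ (fun N => RtoC 1 * (RtoC c + RtoC (INR N)) * (RtoC q + RtoC (INR N))
               * TC (RtoC c) (RtoC q) (RtoC a) (RtoC b) (RtoC 1) N)).
    + apply ccv_add; apply ccv_scal; eassumption.
    + intro N. cbv beta. rewrite <- (ID1 (RtoC a) (RtoC b) (RtoC c) (RtoC q) (RtoC 1) Ha Hb N).
      ring.
    + exact Bd.
  - replace (RtoC (a - 2)) with (RtoC a - 1 - 1) in Ha2
      by (rewrite <- !RtoC_minus; f_equal; lra).
    rewrite RtoC_minus in Ha1, Hw.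
    apply toC_inj. repeat (rewrite toC_add || rewrite toC_mul || rewrite toC_sub || rewrite toC_ofC || rewrite toC_RtoC).
    rewrite !RtoC_mult, !RtoC_minus, !RtoC_plus, R2C.
    eapply (finish _ (fun N => RtoC 1 * (RtoC c + RtoC (INR N)) * (RtoC q + RtoC (INR N))
               * TC (RtoC c) (RtoC q) (RtoC a) (RtoC b) (RtoC 1) N)).
    + eapply ccv_eq; [apply ccv_add; [apply (ccv_scal ((RtoC a - 1) * (RtoC a + RtoC b - RtoC c - RtoC q - (1 + 1))) _ _ Hw)
        |apply (ccv_scal (- ((RtoC a - RtoC q - 1) * (RtoC a - RtoC c - 1))) _ _ H0)]|ring].
    + intro N. cbv beta. rewrite <- (ID2 (RtoC a) (RtoC b) (RtoC c) (RtoC q) (RtoC 1) Ha Ha1 Ha2 Hb N).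
      ring.
    + exact Bd.
Qed.
End Aux.

Theorem lemma7p2 :
  (forall a b c q : Cplx,
     ~ nonpos_int (a - Cnat 2)%Cx -> ~ nonpos_int (a - Cnat 1)%Cx ->
     ~ nonpos_int a -> ~ nonpos_int b ->
     forall x : Cplx, Cnorm x < 1 ->
     exists Fq Fq1 Fq2 Fam2 Fam1 Fa : Cplx,
       F32_cv (Cnat 1) c q a b x Fq /\
       F32_cv (Cnat 1) c (q + Cnat 1)%Cx a b x Fq1 /\
       F32_cv (Cnat 1) c (q + Cnat 2)%Cx a b x Fq2 /\
       F32_cv (Cnat 1) c q (a - Cnat 2)%Cx b x Fam2 /\
       F32_cv (Cnat 1) c q (a - Cnat 1)%Cx b x Fam1 /\
       F32_cv (Cnat 1) c q a b x Fa /\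
       ((a - q - Cnat 1) * (b - q - Cnat 1) * Fq
        + q * (a + b - Cnat 3 - Cnat 2 * q - (c - q - Cnat 1) * x) * Fq1
        + q * (Cnat 1 + q) * (Cnat 1 - x) * Fq2
        = (a - Cnat 1) * (b - Cnat 1))%Cx /\
       ((a - Cnat 2) * (a - Cnat 1) * (Cnat 1 - x) * Fam2
        + (a - Cnat 1) * ((Cnat 2 * a - c - q - Cnat 3) * x - a + b + Cnat 1) * Fam1
        - (a - q - Cnat 1) * (a - c - Cnat 1) * x * Fa
        = (a - Cnat 1) * (b - Cnat 1))%Cx)
  /\
  (forall a b c q : R,
     ~ nonpos_int (RtoC (a - 2)) -> ~ nonpos_int (RtoC (a - 1)) ->
     ~ nonpos_int (RtoC a) -> ~ nonpos_int (RtoC b) ->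
     a + b > c + q + 2 ->
     exists Fq Fq1 Fam1 Fa : Cplx,
       F32_cv (Cnat 1) (RtoC c) (RtoC q) (RtoC a) (RtoC b) (Cnat 1) Fq /\
       F32_cv (Cnat 1) (RtoC c) (RtoC (q + 1)) (RtoC a) (RtoC b) (Cnat 1) Fq1 /\
       F32_cv (Cnat 1) (RtoC c) (RtoC q) (RtoC (a - 1)) (RtoC b) (Cnat 1) Fam1 /\
       F32_cv (Cnat 1) (RtoC c) (RtoC q) (RtoC a) (RtoC b) (Cnat 1) Fa /\
       (RtoC ((a - q - 1) * (b - q - 1)) * Fq
        + RtoC (q * (a + b - c - 2 - q)) * Fq1
        = RtoC ((a - 1) * (b - 1)))%Cx /\
       (RtoC ((a - 1) * (a + b - c - q - 2)) * Fam1
        - RtoC ((a - q - 1) * (a - c - 1)) * Fa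
        = RtoC ((a - 1) * (b - 1)))%Cx).
Proof. exact (conj Aux.part1 Aux.part2). Qed.
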